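(* Let $\alpha\ge2$, $h,\ell,t\ge1$, $\varepsilon\ge0$ be integers with $h-\varepsilon\ge2\ell$, and let $\mathcal T$ be a finite family of subspaces of $\mathbb F_q^{(h-\varepsilon)t}$ with $|\mathcal T|\ge\alpha$ such that each member has dimension at most $\ell t$ and any $\alpha$ members span $\mathbb F_q^{(h-\varepsilon)t}$. Then $\alpha\ell\ge h-\varepsilon$ and $$|\mathcal T|\le\Big(\Big\lfloor\tfrac{h-\varepsilon}{\ell}\Big\rfloor-2\Big)+\Big(\alpha-\Big\lfloor\tfrac{h-\varepsilon}{\ell}\Big\rfloor+1\Big)\frac{q^{\ell t+1}-1}{q-1}.$$
   Context: ''Any $\alpha$ members'' means any $\alpha$ members with distinct indices in the family. *)

(* Defs.v *)
From HB Require Import structures.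
From mathcomp Require Import all_boot all_order all_algebra all_field.
Set Implicit Arguments. Unset Strict Implicit. Unset Printing Implicit Defensive.
Import Order.TTheory GRing.Theory Num.Theory.

Definition any_members_span (F : fieldType) (V : vectType F) (m alpha : nat)
  (T : 'I_m -> {vspace V}) : Prop :=
  forall S : {set 'I_m}, #|S| = alpha -> (\sum_(i in S) T i)%VS = fullv.

(* Main.v *)
Require Import Defs.
From HB Require Import structures.
From mathcomp Require Import all_boot all_order all_algebra all_field.
From mathcomp Require Import zify.
Import Order.TTheory GRing.Theory Num.Theory.
Set Implicit Arguments. Unset Strict Implicit. Unset Printing Implicit Defensive.
Local Open Scope ring_scope.

Lemma card_sum (T : finType) (P : pred T) : #|[set x | P x]| = (\sum_x (P x : nat))%N.
Proof. by rewrite -sum1_card big_mkcond /=; apply: eq_bigr => x _; rewrite inE; case: (P x). Qed.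

Lemma subset_card (T : finType) (A : {set T}) n : (n <= #|A|)%N ->
  exists B : {set T}, B \subset A /\ #|B| = n.
Proof.
move/card_geqP=> [s [us ss sA]]; exists [set x in s]; split.
  by apply/subsetP=> x; rewrite inE => /sA.
by rewrite cardsE (card_uniqP us).
Qed.

Section Core.
Variables (F : finFieldType) (N m d c : nat) (T : 'I_m -> {vspace 'rV[F]_N}) (Bs : {set 'I_m}).
Let W := (\sum_(i in Bs) T i)%VS.
Hypothesis HW : (\dim W + d <= N)%N.
Hypothesis HT : forall i, (\dim (T i) < d)%N.
Hypothesis Hspan : forall S' : {set 'I_m}, S' \subset ~: Bs -> #|S'| = c.+1 ->
   (\sum_(i in Bs :|: S') T i)%VS = fullv.

Let bW := vbasis W.
Let bC := vbasis W^C.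
Let e := cat_tuple bW bC.
Let Hd : (d <= \dim W^C)%N.
Proof. rewrite dimv_compl dimvf dim_matrix mul1r; move: HW; lia. Qed.
Let idx (j : 'I_d) := rshift (\dim W) (widen_ord Hd j).

Let free_e : free e.
Proof.
rewrite cat_free (basis_free (vbasisP _)) (basis_free (vbasisP _)) /=.
rewrite !(span_basis (vbasisP _)) directv_addE /= capv_compl eqxx.
by rewrite !directv_trivial.
Qed.

Definition g (a : 'rV[F]_d) (v : 'rV[F]_N) : F :=
  \sum_j a 0 j * coord e (idx j) v.

Lemma g0 a : g a 0 = 0.
Proof. by rewrite /g big1 // => j _; rewrite linear0 mulr0. Qed.
Lemma gD a u v : g a (u + v) = g a u + g a v.
Proof. by rewrite /g -big_split; apply: eq_bigr => j _; rewrite linearD mulrDr. Qed.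
Lemma gZ a k v : g a (k *: v) = k * g a v.
Proof. by rewrite /g mulr_sumr; apply: eq_bigr => j _; rewrite linearZ /= mulrCA. Qed.

Lemma g_span a n (X : n.-tuple 'rV[F]_N) v : v \in <<X>>%VS ->
  (forall i : 'I_n, g a X`_i = 0) -> g a v = 0.
Proof.
move=> /coord_span -> H.
rewrite (big_morph (g a) (gD a) (g0 a)) big1 // => i _.
by rewrite gZ H mulr0.
Qed.

Lemma g_sum a (P : pred 'I_m) (U : 'I_m -> {vspace 'rV[F]_N}) v :
  (forall i, P i -> forall u, u \in U i -> g a u = 0) ->
  v \in (\sum_(i | P i) U i)%VS -> g a v = 0.
Proof.
move=> H /memv_sumP [vs Hvs ->].
rewrite (big_morph (g a) (gD a) (g0 a)) big1 // => i Pi.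
exact: H (Hvs i Pi).
Qed.

Lemma g_W a v : v \in W -> g a v = 0.
Proof.
rewrite -(span_basis (vbasisP W)) => Hv; apply: (g_span Hv) => i.
have -> : bW`_i = e`_(lshift (\dim W^C) i).
  by rewrite /e /= nth_cat size_tuple ltn_ord.
rewrite /g big1 // => j _; rewrite coord_free // eq_lrshift mulr0 //.
Qed.

Lemma g_idx a j0 : g a e`_(idx j0) = a 0 j0.
Proof.
rewrite /g (bigD1 j0) // coord_free // eqxx mulr1 big1 ?Monoid.simpm // => j Hj.
rewrite coord_free // eq_rshift.
have -> : (widen_ord Hd j0 == widen_ord Hd j) = false.
  by apply/negbTE; apply: contra Hj => /eqP/(congr1 val) /= Hv; apply/eqP/val_inj.
by rewrite mulr0.
Qed.

Definition van (i : 'I_m) (a : 'rV[F]_d) : bool :=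
  [forall k : 'I_(\dim (T i)), g a (vbasis (T i))`_k == 0].

Lemma van_mem i a : van i a -> forall v, v \in T i -> g a v = 0.
Proof.
move=> /forallP H v; rewrite -(span_basis (vbasisP (T i))) => Hv.
by apply: (g_span Hv) => k; apply/eqP/H.
Qed.

Lemma g_ne0 a : a != 0 -> exists v, g a v != 0.
Proof.
move=> Ha.
have [j0 Hj0]: exists j, a 0 j != 0.
  apply/existsP; apply: contraR Ha => /existsPn H; apply/eqP/rowP => j.
  by rewrite mxE; apply/eqP; move: (H j); rewrite negbK.
by exists e`_(idx j0); rewrite g_idx.
Qed.

Lemma fiber_small a : a != 0 -> (#|[set i in ~: Bs | van i a]| <= c)%N.
Proof.
move=> Ha; rewrite leqNgt; apply/negP => Hc.
have [S' [sS' cS']] := subset_card Hc.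
have sB : S' \subset ~: Bs.
  by apply/subsetP=> i /(subsetP sS'); rewrite inE => /andP[].
have Hs := Hspan sB cS'.
have [v Hv] := g_ne0 Ha.
have Hm : v \in (\sum_(i in Bs :|: S') T i)%VS by rewrite Hs memvf.
have H0 : g a v = 0.
  apply: (g_sum _ Hm) => i; rewrite inE => /orP [iB | iS] u Hu.
    by apply: g_W; apply: (subvP (sumv_sup i iB (subvv (T i)))).
  move: (subsetP sS' i iS); rewrite inE => /andP[_ Hvan].
  exact: van_mem Hvan u Hu.
by rewrite H0 eqxx in Hv.
Qed.

Lemma fiber_big i : (#|F| - 1 <= #|[set a | (a != 0%R) && van i a]|)%N.
Proof.
set bi := vbasis (T i).
pose C := \matrix_(j < d, k < \dim (T i)) coord e (idx j) bi`_k.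
have HK : kermx C != 0.
  by rewrite -mxrank_eq0 mxrank_ker subn_eq0 -ltnNge (leq_ltn_trans (rank_leq_col C) (HT i)).
have [r Hr] : exists r, row r (kermx C) != 0.
  apply/existsP; apply: contraR HK => /existsPn H; apply/eqP/row_matrixP => r.
  by rewrite row0; apply/eqP/negbNE/H.
set a0 := row r (kermx C).
have Hv : forall k : F, van i (k *: a0).
  move=> k; apply/forallP => x.
  have : (k *: a0) *m C = 0 by apply/sub_kermxP; rewrite scalemx_sub // row_sub.
  move/rowP/(_ x); rewrite [LHS]mxE [RHS]mxE => H.
  apply/eqP; rewrite -H /g; apply: eq_bigr => j _.
  by rewrite /C !mxE.
have inj : injective (fun k : F => k *: a0).
  move=> k k' /eqP; rewrite -subr_eq0 -scalerBl scaler_eq0 (negbTE Hr) orbF subr_eq0.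
  by move/eqP.
rewrite subn1 -(cardsC1 (0 : F)) -(card_imset _ inj).
apply: subset_leq_card; apply/subsetP => a /imsetP [k Hk ->].
rewrite inE Hv andbT scaler_eq0 (negbTE Hr) orbF.
by rewrite !inE in Hk.
Qed.

Lemma count_main : (#|~: Bs| * (#|F| - 1) <= c * (#|F| ^ d - 1))%N.
Proof.
pose f (i : 'I_m) (a : 'rV[F]_d) : nat := [&& i \in ~: Bs, a != 0 & van i a].
have L : (#|~: Bs| * (#|F| - 1) <= \sum_i \sum_a f i a)%N.
  rewrite -sum_nat_const.
  rewrite [X in (_ <= X)%N](bigID (fun i => i \in ~: Bs)) /=.
  apply: leq_trans (leq_addr _ _); apply: leq_sum => i Hi.
  apply: (leq_trans (fiber_big i)); rewrite card_sum; apply: eq_leq.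
  by apply: eq_bigr => a _; rewrite /f Hi.
apply: (leq_trans L); rewrite exchange_big /=.
rewrite (bigID (fun a => a != 0)) /= [X in (_ + X)%N]big1 ?addn0; last first.
  by move=> a /negbNE Ha; apply: big1 => i _; rewrite /f Ha andbF.
apply: (@leq_trans (\sum_(a | a != 0) c)).
  apply: leq_sum => a Ha; apply: (leq_trans _ (fiber_small Ha)).
  by rewrite card_sum; apply: eq_leq; apply: eq_bigr => i _; rewrite /f Ha.
rewrite big_const iter_addn_0 leq_mul2l; apply/orP; right.
have -> : #|(fun a : 'rV[F]_d => a != 0)| = #|predC1 (0 : 'rV[F]_d)| by [].
by rewrite cardC1 card_mx mul1n subn1.
Qed.

End Core.

Local Close Scope ring_scope.
Theorem mainTheorem11 (F : finFieldType) (alpha h l t eps m : nat)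
  (T : 'I_m -> {vspace 'rV[F]_((h - eps) * t)}) :
  (2 <= alpha)%N -> (1 <= h)%N -> (1 <= l)%N -> (1 <= t)%N ->
  (2 * l <= h - eps)%N ->
  (alpha <= m)%N ->
  (forall i, (\dim (T i) <= l * t)%N) ->
  any_members_span alpha T ->
  (h - eps <= alpha * l)%N /\
  (m%:Q <= (((h - eps) %/ l)%N%:Q - 2%:Q)
           + (alpha%:Q - ((h - eps) %/ l)%N%:Q + 1)
             * (((#|F| ^ (l * t + 1))%N%:Q - 1) / (#|F|%:Q - 1)))%R.
Proof.
move: T; set n := (h - eps); move=> T Ha Hh Hl Ht Hn Ham Hdim Hsp.
have cardT : #|[set: 'I_m]| = m by rewrite cardsT card_ord.
have dimF : \dim (fullv : {vspace 'rV[F]_(n * t)}) = (n * t)%N.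
  by rewrite dimvf dim_matrix mul1r.
have H1 : (n <= alpha * l)%N.
  have Hc : (alpha <= #|[set: 'I_m]|)%N by rewrite cardT.
  have [S [_ cS]] := subset_card Hc.
  have := Hsp S cS => HS.
  have : (n * t <= alpha * l * t)%N.
    rewrite -dimF -HS -mulnA -cS -sum_nat_const.
    apply: (leq_trans (dimv_leq_sum _ _ _)); apply: leq_sum => i _; exact: Hdim.
  by rewrite leq_pmul2r.
split => //.
set k := (n %/ l)%N.
have Hk2 : (2 <= k)%N by rewrite leq_divRL.
have Hkl : (k * l <= n)%N by apply: leq_divM.
have Hka : (k <= alpha)%N by rewrite -(leq_pmul2r Hl) (leq_trans Hkl).
have Hc : (k - 2 <= #|[set: 'I_m]|)%N.
  by rewrite cardT; apply: leq_trans (leq_subr _ _) (leq_trans Hka Ham).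
have [Bs [_ cB]] := subset_card Hc.
have HW : (\dim (\sum_(i in Bs) T i) + (l * t + 1) <= n * t)%N.
  have : (\dim (\sum_(i in Bs) T i) <= (k - 2) * (l * t))%N.
    rewrite -cB -sum_nat_const.
    apply: (leq_trans (dimv_leq_sum _ _ _)); apply: leq_sum => i _; exact: Hdim.
  have : (k * l * t <= n * t)%N by rewrite leq_pmul2r.
  have : (1 <= l * t)%N by rewrite muln_gt0 Hl.
  move: Hk2; clear; move: (\dim _) => D; nia.
have HT : forall i, (\dim (T i) < l * t + 1)%N by move=> i; rewrite addn1 ltnS.
have Hspan : forall S' : {set 'I_m}, S' \subset ~: Bs -> #|S'| = (alpha - k + 1).+1 ->
   (\sum_(i in Bs :|: S') T i)%VS = fullv.
  move=> S' sS cS; apply: Hsp.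
  rewrite cardsU cB cS.
  have -> : #|Bs :&: S'| = 0%N.
    apply/eqP; rewrite cards_eq0 setI_eq0 disjoint_sym disjoints_subset //.
  move: Hk2 Hka; clear; lia.
have C := count_main HW HT Hspan.
have cC : #|~: Bs| = (m - (k - 2))%N by rewrite cardsCs setCK card_ord cB.
rewrite cC in C.
have q2 := card_finNzRing_gt1 F.
set q := #|F| in C q2 *.
have Hqd : (1 <= q ^ (l * t + 1))%N by rewrite expn_gt0; move: q2; clear; lia.
have Hmk : (k - 2 <= m)%N by move: Hka Ham; clear; lia.
have -> : (m%:Q = (k - 2)%N%:Q + (m - (k - 2))%N%:Q)%R by rewrite -natrD subnKC.
have E : forall n : nat, (n%:Q = n%:R :> rat)%R by move=> n'; rewrite pmulrn.
rewrite !E.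
have -> : ((k - 2)%N%:R = k%:R - (1+1)%:R :> rat)%R by rewrite natrB.
rewrite lerD2l.
have -> : ((alpha%:R - k%:R + 1) = (alpha - k + 1)%N%:R :> rat)%R by rewrite natrD natrB.
have -> : (((q ^ (l * t + 1))%N%:R - 1) = (q ^ (l * t + 1) - 1)%N%:R :> rat)%R by rewrite natrB.
have -> : ((q%:R - 1) = (q - 1)%N%:R :> rat)%R by rewrite natrB //; move: q2; clear; lia.
rewrite mulrA ler_pdivlMr; last by rewrite ltr0n; move: q2; clear; lia.
by rewrite -!natrM ler_nat.
Qed.
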